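(* Let $n\ge1$ and let $\mathcal W$ be a nonprincipal ultrafilter on a countably infinite set which is not a P-point. If $\mathcal W$ is $(n+1,T(n+1))$-weakly Ramsey, then it is also $(n,T(n))$-weakly Ramsey.
   Context: An ultrafilter $\mathcal W$ on a countably infinite set $S$ is a P-point if for every function $f$ on $S$ there is $A\in\mathcal W$ with $f\restriction A$ finite-to-one or constant. $\mathcal W$ is $(n,t)$-weakly Ramsey if whenever $[S]^n$ is partitioned into finitely many pieces there is $H\in\mathcal W$ with $[H]^n$ meeting at most $t$ pieces. An $n$-type is a linear pre-order of the formal symbols $x_1,\dots,x_n,y_1,\dots,y_n$ such that $y_1<\dots<y_n$ strictly, each $x_i<y_i$ strictly, and any two distinct equivalent symbols are both $x$'s; $T(n)$ denotes the (finite) number of $n$-types (e.g. $T(2)=4$). *)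

(* Defs.v *)
From mathcomp Require Import all_boot.
From Stdlib Require List.
Set Implicit Arguments. Unset Strict Implicit. Unset Printing Implicit Defensive.

Definition subset_of {S : Type} (A B : S -> Prop) : Prop := forall x, A x -> B x.

Definition finite_set {S : Type} (A : S -> Prop) : Prop :=
  exists l : list S, forall x, A x -> List.In x l.

Definition nsubset {S : Type} (n : nat) (A : S -> Prop) : Prop :=
  exists l : list S, List.NoDup l /\ List.length l = n /\
    forall x, A x <-> List.In x l.

Definition countably_infinite (S : Type) : Prop :=
  exists f : S -> nat, bijective f.

Definition ultrafilter {S : Type} (U : (S -> Prop) -> Prop) : Prop :=
  [/\ U (fun _ => True),
      ~ U (fun _ => False),
      (forall A B, U A -> subset_of A B -> U B),
      (forall A B, U A -> U B -> U (fun x => A x /\ B x)) &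
      (forall A, U A \/ U (fun x => ~ A x))].

Definition nonprincipal {S : Type} (U : (S -> Prop) -> Prop) : Prop :=
  forall a : S, ~ U (fun x => x = a).

Definition Ppoint {S : Type} (U : (S -> Prop) -> Prop) : Prop :=
  forall (Y : Type) (f : S -> Y), exists A, U A /\
    ((forall y : Y, finite_set (fun x => A x /\ f x = y)) \/
     (exists y : Y, forall x, A x -> f x = y)).

(* (n,t)-weakly Ramsey: for every partition of [S]^n into finitely many
   (k) pieces, given by a colouring c, some H in U has [H]^n meeting at most
   t pieces. *)
Definition weakly_ramsey {S : Type} (U : (S -> Prop) -> Prop) (n t : nat) : Prop :=
  forall (k : nat) (c : (S -> Prop) -> nat),
    (forall A, nsubset n A -> c A < k) ->
    exists H, U H /\
      exists L : list nat, List.length L <= t /\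
        forall A, nsubset n A -> subset_of A H -> List.In (c A) L.

(* symbols: inl i = x_(i+1), inr i = y_(i+1) *)
Definition sym (n : nat) : finType := ('I_n + 'I_n)%type.

Definition is_x {n : nat} (a : sym n) : bool := if a is inl _ then true else false.

(* R a b  means  a <= b in the pre-order *)
Definition ntype (n : nat) (R : {ffun sym n * sym n -> bool}) : bool :=
  let le a b := R (a, b) in
  let lt a b := le a b && ~~ le b a in
  [&& [forall a, forall b, le a b || le b a],
      [forall a, forall b, forall c, le a b ==> le b c ==> le a c],
      [forall a, le a a],
      [forall i : 'I_n, forall j : 'I_n, (i < j) ==> lt (inr i) (inr j)],
      [forall i : 'I_n, lt (inl i) (inr i)] &
      [forall a, forall b, ((a != b) && le a b && le b a) ==>
                           (is_x a && is_x b)]].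

Definition T (n : nat) : nat := #|[pred R : {ffun sym n * sym n -> bool} | ntype R]|.

(* Main.v *)
Require Import Defs.
From mathcomp Require Import all_boot zify.
Set Implicit Arguments. Unset Strict Implicit. Unset Printing Implicit Defensive.

Definition idx {m} (u : sym m) : nat := match u with inl i => i | inr i => i end.
Definition vl (mm : nat -> nat) (s : seq nat) (b : bool) (i : nat) : nat :=
  if b then (mm (nth 0 s i)) * 2 else (nth 0 s i) * 2 + 1.
Definition vs mm s {m} (u : sym m) : nat := vl mm s (is_x u) (idx u).
Definition tau mm m s : {ffun sym m * sym m -> bool} :=
  [ffun p => vs mm s p.1 <= vs mm s p.2].

Lemma nth_lt s i j : sorted ltn s -> i < j -> j < size s -> nth 0 s i < nth 0 s j.
Proof.
move=> hs ij js. apply: (sorted_ltn_nth ltn_trans 0 hs) => //; rewrite inE //.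
exact: ltn_trans ij js.
Qed.

Lemma tau_ntype mm m s : (forall j, mm j <= j) -> sorted ltn s -> size s = m ->
  ntype (tau mm m s).
Proof.
move=> hmm hs hsz; rewrite /ntype.
apply/andP; split.
  apply/forallP => a; apply/forallP => b; rewrite !ffunE /=; exact: leq_total.
apply/andP; split.
  apply/forallP => a; apply/forallP => b; apply/forallP => c; rewrite !ffunE /=.
  apply/implyP => h1; apply/implyP => h2; exact: leq_trans h1 h2.
apply/andP; split.
  by apply/forallP => a; rewrite !ffunE.
apply/andP; split.
  apply/forallP => i; apply/forallP => j; apply/implyP => ij; rewrite !ffunE /vs /vl /=.
  have := nth_lt hs ij (_ : j < size s). rewrite hsz ltn_ord => /(_ isT). lia.
apply/andP; split.
  apply/forallP => i; rewrite !ffunE /vs /vl /=.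
  have := hmm (nth 0 s i). lia.
apply/forallP => a; apply/forallP => b; apply/implyP; rewrite !ffunE.
case: a => i; case: b => j //=; rewrite /vs /vl /=.
- move=> /andP [h1 h2]; lia.
- move=> /andP [h1 h2]; lia.
- move=> /andP [/andP [hne h1] h2].
  have [ij|ji|ij] := ltngtP i j.
  + have := nth_lt hs ij (_ : j < size s). rewrite hsz ltn_ord => /(_ isT). lia.
  + have := nth_lt hs ji (_ : i < size s). rewrite hsz ltn_ord => /(_ isT). lia.
  + have : i = j by apply: val_inj.
    move=> e; subst j. by rewrite eqxx in hne.
Qed.

Lemma ntypeP m (R : {ffun sym m * sym m -> bool}) : ntype R ->
  [/\ (forall a b, R (a,b) || R (b,a)),
      (forall a b c, R (a,b) -> R (b,c) -> R (a,c)),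
      (forall i j : 'I_m, i < j -> R (inr i, inr j) && ~~ R (inr j, inr i)),
      (forall i : 'I_m, R (inl i, inr i) && ~~ R (inr i, inl i)) &
      (forall a b, a != b -> R (a,b) -> R (b,a) -> is_x a && is_x b)].
Proof.
rewrite /ntype => /andP [/forallP h1 /andP [/forallP h2 /andP [_ /andP [/forallP h4
   /andP [/forallP h5 /forallP h6]]]]].
split.
- move=> a b; exact: (forallP (h1 a) b).
- move=> a b c hab hbc. move: (forallP (forallP (h2 a) b) c). by rewrite hab hbc.
- move=> i j ij. move: (forallP (h4 i) j). by rewrite ij.
- move=> i; exact: h5.
- move=> a b ab hab hba. move: (forallP (h6 a) b). by rewrite ab hab hba.
Qed.

Definition rk m (R : {ffun sym m * sym m -> bool}) (a : sym m) : nat :=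
  #|[pred b : sym m | R (b,a) && ~~ R (a,b)]|.

Lemma rk_le m (R : {ffun sym m * sym m -> bool}) a b : ntype R ->
  R (a,b) = (rk R a <= rk R b).
Proof.
move=> /ntypeP [tot tr _ _ _].
case hab: (R (a,b)).
  apply/esym/subset_leq_card; apply/subsetP => c; rewrite !inE => /andP [hca hac].
  rewrite (tr _ _ _ hca hab) /=; apply/negP => hbc.
  by move: hac; rewrite (tr _ _ _ hab hbc).
have hba : R (b,a) by move: (tot a b); rewrite hab.
apply/esym/negbTE; rewrite -ltnNge.
apply: proper_card; apply/properP; split.
  apply/subsetP => c; rewrite !inE => /andP [hcb hbc].
  rewrite (tr _ _ _ hcb hba) /=; apply/negP => hac.
  by move: hab; rewrite (tr _ _ _ hac hcb).
exists b; rewrite !inE ?hba ?hab //=.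
by rewrite andbN.
Qed.

Lemma rk_lt m (R : {ffun sym m * sym m -> bool}) a : rk R a < #|sym m|.
Proof.
apply: proper_card; apply/properP; split; first exact: subset_predT.
exists a => //; rewrite !inE. by rewrite andbN.
Qed.

Definition Inv m (R : {ffun sym m * sym m -> bool}) (mm : nat -> nat) (HN : nat -> Prop)
  (J : nat) (F : nat -> nat) :=
 [/\ (forall l1 l2, l1 < l2 -> l2 < J -> F l1 < F l2),
     (forall i : 'I_m, rk R (inl i) < J -> exists2 c, F (rk R (inl i)) = c*2 &
          (forall M, exists z, HN z /\ mm z = c /\ M < z)) &
     (forall i : 'I_m, rk R (inr i) < J -> exists y,
          [/\ F (rk R (inr i)) = y*2+1, HN y & mm y * 2 = F (rk R (inl i))])].

Lemma rk_in m (R : {ffun sym m * sym m -> bool}) (i : 'I_m) : ntype R ->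
  rk R (inl i) < rk R (inr i).
Proof.
move=> hR; have [_ _ _ h _] := ntypeP hR.
move: (h i) => /andP [_]; rewrite (rk_le _ _ hR) -ltnNge; done.
Qed.

Lemma rk_eq m (R : {ffun sym m * sym m -> bool}) a b : ntype R ->
  rk R a = rk R b -> a != b -> is_x a && is_x b.
Proof.
move=> hR e ab; have [_ _ _ _ h] := ntypeP hR.
apply: h => //; rewrite (rk_le _ _ hR) e //.
Qed.

Lemma Inv_step m R mm HN J F : ntype R ->
  (forall N, exists j, HN j /\ N < mm j /\ forall M, exists z, HN z /\ mm z = mm j /\ M < z) ->
  @Inv m R mm HN J F -> exists F', @Inv m R mm HN J.+1 F'.
Proof.
move=> hR sup [h1 h2 h3].
pose B := \max_(l < J) F l.
have hB : forall l, l < J -> F l <= B.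
  move=> l hl; exact: (leq_bigmax (F := fun l : 'I_J => F l) (Ordinal hl)).
have mono : forall v, B < v -> forall l1 l2, l1 < l2 -> l2 < J.+1 ->
    (fun l => if l == J then v else F l) l1 < (fun l => if l == J then v else F l) l2.
  move=> v hv l1 l2 l12 l2J /=.
  have hl1 : l1 < J by lia.
  rewrite (_ : (l1 == J) = false); last by apply/eqP; lia.
  case: eqP => e.
    have := hB _ hl1; lia.
  apply: h1 => //; lia.
case: (pickP (fun i : 'I_m => rk R (inr i) == J)) => [i /eqP hi | noy].
  have hlt : rk R (inl i) < J by rewrite -hi rk_in.
  have [c hc hinf] := h2 i hlt.
  have [z [hz [hmz hBz]]] := hinf B.
  exists (fun l => if l == J then z*2+1 else F l); split.
  - apply: mono; lia.
  - move=> i' hi'. case: eqP => e.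
      by have /(_ isT) := rk_eq hR (etrans e (esym hi)).
    apply: h2; lia.
  - move=> i' hi'. case: eqP => e.
      case: (eqVneq i' i) => [ii | ne]; last first.
        have hne : (inr i' : sym m) != inr i.
          apply/negP => /eqP [] e'. by rewrite e' eqxx in ne.
        by move: (rk_eq hR (etrans e (esym hi)) hne).
      subst i'. exists z; split => //.
      have := rk_in i hR; rewrite hi => hl.
      rewrite (_ : (rk R (inl i) == J) = false); last by apply/eqP; lia.
      lia.
    have hlt' : rk R (inr i') < J by lia.
    have [y [e1 e2 e3]] := h3 i' hlt'.
    exists y; split => //.
    have := rk_in i' hR => hl.
    rewrite (_ : (rk R (inl i') == J) = false) //; apply/eqP; lia.
case: (pickP (fun i : 'I_m => rk R (inl i) == J)) => [i /eqP hi | nox].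
  have [j [hj [hBj hinf]]] := sup B.
  exists (fun l => if l == J then mm j * 2 else F l); split.
  - apply: mono; lia.
  - move=> i' hi'. case: eqP => e.
      by exists (mm j).
    apply: h2; lia.
  - move=> i' hi'. case: eqP => e.
      by move: (noy i'); rewrite /= e eqxx.
    have hlt' : rk R (inr i') < J by lia.
    have [y [e1 e2 e3]] := h3 i' hlt'.
    exists y; split => //.
    have := rk_in i' hR => hl.
    rewrite (_ : (rk R (inl i') == J) = false) //; apply/eqP; lia.
exists (fun l => if l == J then B.+1 else F l); split.
- apply: mono; lia.
- move=> i' hi'. case: eqP => e.
    by move: (nox i'); rewrite /= e eqxx.
  apply: h2; lia.
- move=> i' hi'. case: eqP => e.
    by move: (noy i'); rewrite /= e eqxx.
  have hlt' : rk R (inr i') < J by lia.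
    have [y [e1 e2 e3]] := h3 i' hlt'.
  exists y; split => //.
  have := rk_in i' hR => hl.
  rewrite (_ : (rk R (inl i') == J) = false) //; apply/eqP; lia.
Qed.

Lemma realize m (R : {ffun sym m * sym m -> bool}) (mm : nat -> nat) (HN : nat -> Prop) :
  ntype R ->
  (forall N, exists j, HN j /\ N < mm j /\ forall M, exists z, HN z /\ mm z = mm j /\ M < z) ->
  exists s, [/\ sorted ltn s, size s = m, (forall j, j \in s -> HN j) & tau mm m s = R].
Proof.
move=> hR sup.
have hall : forall J, exists F, Inv R mm HN J F.
  elim => [|J [F hF]]; last exact: Inv_step hR sup hF.
  by exists (fun _ => 0); split.
have [F [h1 _ h3]] := hall #|sym m|.
pose yv := fun i : 'I_m => F (rk R (inr i)) %/ 2.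
have hyv : forall i, [/\ F (rk R (inr i)) = yv i * 2 + 1, HN (yv i) &
                        mm (yv i) * 2 = F (rk R (inl i))].
  move=> i; have [y [e1 e2 e3]] := h3 i (rk_lt _ _).
  have -> : yv i = y by rewrite /yv e1; lia.
  by split.
pose s := map yv (enum 'I_m).
have hnth : forall i : 'I_m, nth 0 s i = yv i.
  by move=> i; rewrite /s (nth_map i) ?size_enum_ord ?ltn_ord // nth_ord_enum.
have Fmono : forall a b : sym m, (F (rk R a) <= F (rk R b)) = (rk R a <= rk R b).
  move=> a b; have [ab|ba|ab] := ltngtP (rk R a) (rk R b).
  - by apply/idP; apply: ltnW; apply: h1 => //; exact: rk_lt.
  - by apply/negbTE; rewrite -ltnNge; apply: h1 => //; exact: rk_lt.
  - by rewrite ab leqnn.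
exists s; split.
- apply/(sortedP 0) => i; rewrite size_map size_enum_ord => hi.
  have hi1 : i < m by apply: ltnW.
  rewrite (hnth (Ordinal hi1)) (hnth (Ordinal hi)).
  have [_ _ hy _ _] := ntypeP hR.
  move: (hy (Ordinal hi1) (Ordinal hi) (ltnSn i)) => /andP [hle _].
  rewrite (rk_le _ _ hR) in hle.
  case: (hyv (Ordinal hi1)) => [e1 _ _]; case: (hyv (Ordinal hi)) => [e2 _ _].
  have: rk R (inr (Ordinal hi1)) != rk R (inr (Ordinal hi)).
    apply/eqP => e. move: (hy (Ordinal hi1) (Ordinal hi) (ltnSn i)) => /andP [_].
    by rewrite (rk_le _ _ hR) e leqnn.
  move=> ne.
  have hlt : rk R (inr (Ordinal hi1)) < rk R (inr (Ordinal hi)) by rewrite ltn_neqAle ne hle.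
  have := h1 _ _ hlt (rk_lt _ _). rewrite e1 e2 /=. lia.
- by rewrite size_map size_enum_ord.
- by move=> j /mapP [i _ ->]; case: (hyv i).
- apply/ffunP => -[a b]; rewrite ffunE /=.
  have hvs : forall c : sym m, vs mm s c = F (rk R c).
    case=> i; rewrite /vs /vl /= hnth; case: (hyv i) => // e1 _ e3; lia.
  by rewrite !hvs Fmono (rk_le _ _ hR).
Qed.

Definition mk n (b : bool) (o : 'I_n) : sym n := if b then inl o else inr o.

Lemma tau_ext mm n s1 s2 a1 a2 : (forall j, mm j <= j) -> size s1 = n -> size s2 = n ->
  (forall j, j \in s1 -> j < mm a1) -> (forall j, j \in s2 -> j < mm a2) ->
  tau mm n s1 = tau mm n s2 -> tau mm n.+1 (rcons s1 a1) = tau mm n.+1 (rcons s2 a2).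
Proof.
move=> hmm hs1 hs2 hb1 hb2 H.
have key : forall s a, size s = n -> forall u : sym n.+1,
    vs mm (rcons s a) u = if idx u < n then vl mm s (is_x u) (idx u)
                          else vl mm [::a] (is_x u) 0.
  move=> s a hs u; case: u => i; rewrite /vs /vl /= nth_rcons hs;
  (case: ltnP => h //; have /eqP -> : (i : nat) == n by rewrite eqn_leq h -ltnS ltn_ord);
  by rewrite eqxx.
have bnd : forall s a b b' i, (forall j, j \in s -> j < mm a) -> i < size s ->
    vl mm s b i < vl mm [::a] b' 0.
  move=> s a b b' i hb hi; have := hb _ (mem_nth 0 hi); have := hmm (nth 0 s i);
  have := hmm a; rewrite /vl /=; case: b; case: b'; lia.
apply/ffunP => -[u w]; rewrite !ffunE /= !key //.
case: (ltnP (idx u) n) => hu; case: (ltnP (idx w) n) => hw.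
- have := congr1 (fun f : {ffun sym n * sym n -> bool} => f (mk (is_x u) (Ordinal hu), mk (is_x w) (Ordinal hw))) H.
  rewrite !ffunE /= /vs.
  have e : forall b (o : 'I_n), is_x (mk b o) = b /\ idx (mk b o) = o by case.
  by case: (e (is_x u) (Ordinal hu)) => -> ->; case: (e (is_x w) (Ordinal hw)) => -> ->.
- rewrite (ltnW (bnd s1 a1 _ _ _ hb1 _)) ?hs1 // (ltnW (bnd s2 a2 _ _ _ hb2 _)) ?hs2 //.
- by rewrite leqNgt (bnd s1 a1 _ _ _ hb1) ?hs1 // leqNgt (bnd s2 a2 _ _ _ hb2) ?hs2.
- have h1 := hmm a1; have h2 := hmm a2; rewrite /vl /=; case: (is_x u); case: (is_x w); apply/idP/idP => h; lia.
Qed.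
From Stdlib Require Import ClassicalEpsilon FunctionalExtensionality PropExtensionality Classical_Prop.

Lemma In_mem (T : eqType) (x : T) (l : list T) : List.In x l <-> x \in l.
Proof.
elim: l => [|y l IH] //=; rewrite inE; split.
- by case=> [->|/IH ->]; rewrite ?eqxx ?orbT.
- by case/orP => [/eqP ->|/IH]; [left|right].
Qed.

Lemma length_size (T : Type) (l : list T) : List.length l = size l.
Proof. by elim: l => //= x l ->. Qed.

Lemma path_rcons x p a : path ltn x p -> x < a -> (forall j, j \in p -> j < a) ->
  path ltn x (rcons p a).
Proof.
elim: p x => [|y p IH] x /=; first by move=> _ ->.
move=> /andP [xy hp] xa hj; rewrite xy /=; apply: IH => //.
  by apply: hj; rewrite inE eqxx.
by move=> j hjp; apply: hj; rewrite inE hjp orbT.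
Qed.

Lemma sorted_rcons s a : sorted ltn s -> (forall j, j \in s -> j < a) -> sorted ltn (rcons s a).
Proof.
case: s => [|x p] //= hp hj; apply: path_rcons => //.
  by apply: hj; rewrite inE eqxx.
by move=> j hjp; apply: hj; rewrite inE hjp orbT.
Qed.

Lemma le_sumn s j : j \in s -> j <= sumn s.
Proof.
elim: s => [|x s IH] //=; rewrite inE => /orP [/eqP ->|/IH]; lia.
Qed.

Lemma decode k a b r r' : a < k -> b < k -> a + k * r = b + k * r' -> a = b /\ r = r'.
Proof.
move=> ha hb e.
have [rr|rr|rr] := ltngtP r r'.
- have : k * r.+1 <= k * r' by rewrite leq_mul2l rr orbT.
  rewrite mulnS; lia.
- have : k * r'.+1 <= k * r by rewrite leq_mul2l rr orbT.
  rewrite mulnS; lia.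
- subst r'; split => //; lia.
Qed.

Definition asb (P : Prop) : bool := if excluded_middle_informative P then true else false.
Lemma asbE P : asb P = true <-> P.
Proof. by rewrite /asb; case: excluded_middle_informative. Qed.

Lemma class_fn (Y : Type) (h : nat -> Y) :
  exists mm : nat -> nat, (forall j, mm j <= j) /\ (forall i j, mm i = mm j <-> h i = h j).
Proof.
have ex : forall j, exists k, asb (h k = h j) by move=> j; exists j; apply/asbE.
exists (fun j => ex_minn (ex j)); split.
- move=> j; case: ex_minnP => m _; apply; exact/asbE.
- move=> i j; case: ex_minnP => mi /asbE hi mini; case: ex_minnP => mj /asbE hj minj.
  split.
  + by move=> e; subst mj; rewrite -hi hj.
  + move=> e; apply/eqP; rewrite eqn_leq; apply/andP; split.
      by apply: mini; apply/asbE; rewrite hj e.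
    by apply: minj; apply/asbE; rewrite hi e.
Qed.

Lemma pext (S : Type) (A B : S -> Prop) : (forall x, A x <-> B x) -> A = B.
Proof. move=> h; apply: functional_extensionality => x; exact: propositional_extensionality. Qed.

Definition PS (S : Type) (g : S -> nat) (s : seq nat) : S -> Prop := fun x => g x \in s.

Lemma In_map_g (S : Type) (g : S -> nat) g' (gK : cancel g g') (g'K : cancel g' g) x s :
  List.In x (List.map g' s) <-> g x \in s.
Proof.
elim: s => [|a s IH] //=; rewrite inE; split.
- case=> [<-|/IH ->]; last by rewrite orbT.
  by rewrite g'K eqxx.
- case/orP => [/eqP <-|/IH h]; [left; exact: gK|right; exact: h].
Qed.

Lemma In_mapg (S : Type) (g : S -> nat) g' (gK : cancel g g') x l :
  List.In x l <-> g x \in map g l.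
Proof.
elim: l => [|y l IH] //=; rewrite inE; split.
- case=> [->|/IH ->]; by rewrite ?eqxx ?orbT.
- case/orP => [/eqP e|/IH h]; [left; exact: (can_inj gK (esym e)) | right; exact h].
Qed.

Lemma nsub_of (S : Type) (g : S -> nat) g' (gK : cancel g g') (g'K : cancel g' g) k A :
  nsubset k A -> exists s, [/\ sorted ltn s, size s = k & A = PS g s].
Proof.
case=> l [nd [len hA]].
have hu : uniq (map g l).
  elim: l nd {len hA} => [|x l IH] //= nd.
  inversion nd as [|? ? hx nd']; subst.
  rewrite IH // andbT; apply/negP => /(In_mapg gK); exact: hx.
have hmem : forall x, A x <-> g x \in map g l.
  move=> x; rewrite hA; exact: In_mapg.
exists (sort leq (map g l)); split.
- by rewrite ltn_sorted_uniq_leq sort_uniq hu sort_sorted //; exact: leq_total.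
- by rewrite size_sort size_map -length_size.
- apply: pext => x; rewrite /PS mem_sort; exact: hmem.
Qed.

Lemma nsub_PS (S : Type) (g : S -> nat) g' (gK : cancel g g') (g'K : cancel g' g) s :
  uniq s -> nsubset (size s) (PS g s).
Proof.
move=> hu; exists (List.map g' s); split; last split.
- elim: s hu => [|a s IH] /= hu; first by constructor.
  case/andP: hu => ha hu; constructor; last exact: IH.
  move/(In_map_g gK g'K); rewrite g'K. by rewrite (negbTE ha).
- by rewrite List.length_map length_size.
- move=> x; rewrite /PS; split => h; exact/(In_map_g gK g'K).
Qed.

Lemma PS_inj (S : Type) (g : S -> nat) g' (g'K : cancel g' g) s1 s2 :
  sorted ltn s1 -> sorted ltn s2 -> PS g s1 = PS g s2 -> s1 = s2.
Proof.
move=> h1 h2 e; apply: (irr_sorted_eq ltn_trans ltnn) => // j.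
have := congr1 (fun P => P (g' j)) e; rewrite /PS /= g'K => e'.
apply/idP/idP => h.
- by rewrite -e'.
- by rewrite e'.
Qed.

Definition sl (S : Type) (g : S -> nat) k (A : S -> Prop) : seq nat :=
  match excluded_middle_informative (exists s, [/\ sorted ltn s, size s = k & A = PS g s]) with
  | left h => proj1_sig (constructive_indefinite_description _ h)
  | right _ => [::]
  end.

Lemma sl_eq (S : Type) (g : S -> nat) g' (g'K : cancel g' g) k s :
  sorted ltn s -> size s = k -> sl g k (PS g s) = s.
Proof.
move=> hs hk; rewrite /sl; case: excluded_middle_informative => [h|h]; last first.
  by case: h; exists s.
case: constructive_indefinite_description => s' [h1 h2 h3] /=.
exact: (PS_inj g'K h1 hs (esym h3)).
Qed.

Lemma supply (S : Type) (U : (S -> Prop) -> Prop) (g : S -> nat) g'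
  (gK : cancel g g') (g'K : cancel g' g) (mm : nat -> nat) (Y : Type) (f : S -> Y) :
  ultrafilter U ->
  (forall i j, mm i = mm j <-> f (g' i) = f (g' j)) ->
  (forall A, U A -> ~ ((forall y, finite_set (fun x => A x /\ f x = y)) \/
                       (exists y, forall x, A x -> f x = y))) ->
  forall H, U H -> forall N, exists j, H (g' j) /\ N < mm j /\
     forall M, exists z, H (g' z) /\ mm z = mm j /\ M < z.
Proof.
move=> [uT uF uup ucap udich] hmm hf H hH N.
have K1 : forall c, ~ U (fun x => mm (g x) = c).
  move=> c hc.
  have [x0 hx0] : exists x0, mm (g x0) = c.
    apply: NNPP => hn; apply: uF; apply: (uup _ _ hc) => x hx; apply: hn; by exists x.
  apply: (hf _ hc); right; exists (f x0) => x hx.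
  have := proj1 (hmm (g x) (g x0)); rewrite !gK; apply; by rewrite hx hx0.
have K2 : forall N, U (fun x => N < mm (g x)).
  have hne : forall c, U (fun x => ~ mm (g x) = c).
    move=> c; case: (udich (fun x => mm (g x) = c)) => // h; by case: (K1 c).
  elim => [|N' IH].
    apply: (uup _ _ (hne 0)) => x hx; lia.
  apply: (uup _ _ (ucap _ _ IH (hne N'.+1))) => x [h1 h2]; lia.
apply: NNPP => hn.
pose A := fun x => H x /\ N < mm (g x).
have hA : U A by apply: (uup _ _ (ucap _ _ hH (K2 N))).
apply: (hf _ hA); left => y.
case: (classic (exists x0, A x0 /\ f x0 = y)) => [[x0 [[hx0 hNx0] fx0]]|hno]; last first.
  by exists nil => x hx; case: hno; exists x.
have [M hM] : exists M, forall z, H (g' z) -> mm z = mm (g x0) -> z <= M.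
  apply: NNPP => hn2; apply: hn; exists (g x0); rewrite gK; split => //; split => // M.
  apply: NNPP => hn3; apply: hn2; exists M => z hz ez.
  rewrite leqNgt; apply/negP => Mz; apply: hn3; by exists z.
exists (List.map g' (List.seq 0 M.+1)) => x [[hx hNx] fx].
have hz : g x <= M.
  apply: hM; first by rewrite gK.
  apply/hmm; by rewrite !gK fx0.
rewrite -(gK x); apply: List.in_map; apply/List.in_seq; lia.
Qed.

Lemma take_rc (s : seq nat) a n : size s = n -> take n (rcons s a) = s.
Proof. by move=> h; rewrite -cats1 take_size_cat. Qed.

Lemma sorted_uniq s : sorted ltn s -> uniq s.
Proof. by rewrite ltn_sorted_uniq_leq => /andP []. Qed.

Theorem mainTheorem5 (S : Type) (U : (S -> Prop) -> Prop) (n : nat) :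
  1 <= n ->
  countably_infinite S ->
  ultrafilter U ->
  nonprincipal U ->
  ~ Ppoint U ->
  weakly_ramsey U n.+1 (T n.+1) ->
  weakly_ramsey U n (T n).
Proof.
move=> n1 [g [g' gK g'K]] hU hnp hnP hW.
have [Y [f hf]] : exists Y (f : S -> Y), forall A, U A ->
    ~ ((forall y, finite_set (fun x => A x /\ f x = y)) \/
       (exists y, forall x, A x -> f x = y)).
  apply: NNPP => hn; apply: hnP => Y f; apply: NNPP => hn2; apply: hn.
  exists Y, f => A hA h; apply: hn2; exists A; split => //.
have [mm [hmm hcl]] := class_fn (fun j => f (g' j)).
have sup := @supply S U g g' gK g'K mm Y f hU hcl hf.
move=> k c hc.
pose cN := fun s => c (PS g s).
pose NT := #|{ffun sym n.+1 * sym n.+1 -> bool}|.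
pose rank := fun R : {ffun sym n.+1 * sym n.+1 -> bool} => nat_of_ord (enum_rank R).
pose d := fun A => cN (take n (sl g n.+1 A)) + k * rank (tau mm n.+1 (sl g n.+1 A)).
have hcN : forall s, sorted ltn s -> size s = n -> cN s < k.
  move=> s hs hsz; apply: hc; rewrite -hsz; apply: (nsub_PS gK g'K); exact: sorted_uniq.
have hck : forall s, sorted ltn s -> size s = n.+1 -> cN (take n s) < k.
  move=> s hs hsz; apply: hcN; first exact: take_sorted.
  by rewrite size_take hsz ltnSn.
have hd : forall A, nsubset n.+1 A -> d A < k * NT.+1.
  move=> A /(nsub_of gK g'K) [s [hs hsz ->]].
  rewrite /d (sl_eq g'K hs hsz).
  have h1 := hck s hs hsz.
  have h2 : rank (tau mm n.+1 s) < NT by exact: ltn_ord.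
  have : k * rank (tau mm n.+1 s) <= k * NT by rewrite leq_mul2l ltnW ?orbT.
  rewrite mulnS; lia.
have [H1 [hH1 [L [hL hLin]]]] := hW (k * NT.+1) d hd.
pose HN := fun j => H1 (g' j).
have sup1 := sup H1 hH1.
have hPS : forall t, sorted ltn t -> size t = n.+1 -> (forall j, j \in t -> HN j) ->
    List.In (d (PS g t)) L /\ d (PS g t) = cN (take n t) + k * rank (tau mm n.+1 t).
  move=> t ht htz hall; split; last by rewrite /d (sl_eq g'K ht htz).
  apply: hLin.
    rewrite -htz; apply: (nsub_PS gK g'K); exact: sorted_uniq.
  move=> x hx; have := hall _ hx; by rewrite /HN gK.
pose realF := fun R => match excluded_middle_informative (exists s, [/\ sorted ltn s,
    size s = n.+1, (forall j, j \in s -> HN j) & tau mm n.+1 s = R]) with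
  | left h => proj1_sig (constructive_indefinite_description _ h)
  | right _ => [::] end.
have hreal : forall R, ntype R -> [/\ sorted ltn (realF R), size (realF R) = n.+1,
    (forall j, j \in realF R -> HN j) & tau mm n.+1 (realF R) = R].
  move=> R hR; rewrite /realF; case: excluded_middle_informative => [h|h].
    by case: constructive_indefinite_description.
  case: h; exact: realize hR sup1.
pose E1 := enum [pred R : {ffun sym n.+1 * sym n.+1 -> bool} | ntype R].
pose v := fun R => cN (take n (realF R)) + k * rank R.
have dep : forall t, sorted ltn t -> size t = n.+1 -> (forall j, j \in t -> HN j) ->
    cN (take n t) = cN (take n (realF (tau mm n.+1 t))).
  move=> t ht htz hall.
  set R := tau mm n.+1 t.
  have hR : ntype R := tau_ntype hmm ht htz.
  have [hs1 hs2 hs3 hs4] := hreal R hR.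
  have [inx ex] := hPS t ht htz hall.
  case: (eqVneq (cN (take n t)) (cN (take n (realF R)))) => // ne.
  exfalso.
  have rinj : forall R1 R2, rank R1 = rank R2 -> R1 = R2.
    by move=> R1 R2 e; apply: enum_rank_inj; apply: val_inj.
  have uw : uniq (map v E1).
    rewrite map_inj_in_uniq ?enum_uniq // => R1 R2; rewrite !mem_enum => h1 h2 e.
    have [hr1 hr2 _ _] := hreal R1 h1; have [hr1' hr2' _ _] := hreal R2 h2.
    have [_ er] := decode (hck _ hr1 hr2) (hck _ hr1' hr2') e.
    exact: rinj.
  have nin : d (PS g t) \notin map v E1.
    apply/negP => /mapP [R' hR' e]; rewrite ex in e.
    move: hR'; rewrite mem_enum => hR'.
    have [hr1 hr2 _ _] := hreal R' hR'.
    have [e1 e2] := decode (hck _ ht htz) (hck _ hr1 hr2) e.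
    have := rinj _ _ e2 => eR; subst R'.
    by rewrite e1 eqxx in ne.
  have hu : uniq (d (PS g t) :: map v E1) by rewrite /= nin uw.
  have hsb : {subset d (PS g t) :: map v E1 <= L}.
    move=> x; rewrite inE => /orP [/eqP ->|/mapP [R' hR' ->]]; apply/In_mem; first exact: inx.
    move: hR'; rewrite mem_enum => hR'.
    have [hr1 hr2 hr3 hr4] := hreal R' hR'.
    have [i1 e1] := hPS _ hr1 hr2 hr3.
    by rewrite hr4 in e1; rewrite /v -e1.
  have := uniq_leq_size hu hsb.
  rewrite /= size_map; rewrite length_size in hL.
  have -> : size E1 = T n.+1 by rewrite /E1 /T cardE.
  lia.
exists H1; split => //.
pose col := fun R : {ffun sym n * sym n -> bool} => match excluded_middle_informative
    (exists s, [/\ sorted ltn s, size s = n, (forall j, j \in s -> HN j) & tau mm n s = R]) with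
  | left h => cN (proj1_sig (constructive_indefinite_description _ h))
  | right _ => 0 end.
exists (map col (enum [pred R : {ffun sym n * sym n -> bool} | ntype R])); split.
  by rewrite length_size size_map /T cardE.
move=> A /(nsub_of gK g'K) [s [hs hsz ->]] hsub.
have hall : forall j, j \in s -> HN j.
  move=> j hj; apply: hsub; by rewrite /PS g'K.
apply/In_mem; change (cN s \in map col (enum [pred R : {ffun sym n * sym n -> bool} | ntype R])).
apply/mapP; exists (tau mm n s); first by rewrite mem_enum; exact: tau_ntype.
rewrite /col; case: excluded_middle_informative => [h|h]; last by case: h; exists s.
case: constructive_indefinite_description => s0 [h1 h2 h3 h4] /=.
have [a [ha [hma _]]] := sup1 (sumn s + sumn s0).
have bs : forall j, j \in s -> j < mm a by move=> j /le_sumn; lia.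
have bs0 : forall j, j \in s0 -> j < mm a by move=> j /le_sumn; lia.
have hmma := hmm a.
have allr : forall s', (forall j, j \in s' -> HN j) -> forall j, j \in rcons s' a -> HN j.
  by move=> s' hs' j; rewrite mem_rcons inE => /orP [/eqP ->|/hs'].
have sz1 : size (rcons s a) = n.+1 by rewrite size_rcons hsz.
have sz0 : size (rcons s0 a) = n.+1 by rewrite size_rcons h2.
have e1 := dep (rcons s a) (sorted_rcons hs (fun j hj => leq_trans (bs j hj) hmma))
   sz1 (allr _ hall).
have e0 := dep (rcons s0 a) (sorted_rcons h1 (fun j hj => leq_trans (bs0 j hj) hmma))
   sz0 (allr _ h3).
rewrite take_rc // in e1; rewrite take_rc // in e0.
by rewrite e1 e0 (tau_ext hmm hsz h2 bs bs0 (esym h4)).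
Qed.
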